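(* Let $\underline a=(a_1,a_2,a_3)$, $\underline b=(b_1,b_2,b_3)\in\mathbb{Z}^3$ with all $a_i,b_i\equiv1\pmod4$ and $\gcd(a_1,a_2,a_3)=\gcd(b_1,b_2,b_3)=1$. The subgroup $\{1\}\times\Delta\mathbf{S}^3\subseteq G$ acts freely on $P^{10}_{\underline a,\underline b}$ if and only if $\gcd(a_1,a_2\pm a_3)=1$ and $\gcd(b_1,b_2\pm b_3)=1$.
   Context: $\mathbf{S}^3$ is the group of unit quaternions, $G=\mathbf{S}^3\times\mathbf{S}^3\times\mathbf{S}^3$, $\Delta\mathbf{S}^3=\{(q,q)\}$, $Q=\{\pm1,\pm i,\pm j,\pm k\}$ with diagonal $\Delta Q\subset G$. $\mathrm{Pin}(2)_{\underline a}=\{(e^{ia_1\theta},e^{ia_2\theta},e^{ia_3\theta})\mid\theta\in\mathbb{R}\}\cup\{(e^{ia_1\theta}j,e^{ia_2\theta}j,e^{ia_3\theta}j)\mid\theta\in\mathbb{R}\}$, $\mathrm{Pjn}(2)_{\underline b}=\{(e^{jb_1\theta},e^{jb_2\theta},e^{jb_3\theta})\}\cup\{(ie^{jb_1\theta},ie^{jb_2\theta},ie^{jb_3\theta})\}$. $P^{10}_{\underline a,\underline b}$ is the cohomogeneity-one $G$-manifold with principal isotropy group $\Delta Q$ and singular isotropy groups $\mathrm{Pin}(2)_{\underline a}$, $\mathrm{Pjn}(2)_{\underline b}$: $P^{10}_{\underline a,\underline b}=(G\times_{\mathrm{Pin}(2)_{\underline a}}\mathbf{D}^2)\cup_{G/\Delta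 Q}(G\times_{\mathrm{Pjn}(2)_{\underline b}}\mathbf{D}^2)$, where each singular isotropy group $K$ acts linearly on $\mathbf{D}^2$ extending its transitive action on the circle $K/\Delta Q$, and $G$ acts by left multiplication on the $G$-factor. Its orbits are the principal orbits $G/\Delta Q$ and the singular orbits $G/\mathrm{Pin}(2)_{\underline a}$, $G/\mathrm{Pjn}(2)_{\underline b}$. *)

(* Defs.v *)
From mathcomp Require Import all_boot all_order all_algebra.
From mathcomp Require Import reals trigo.
Set Implicit Arguments. Unset Strict Implicit. Unset Printing Implicit Defensive.
Import Order.TTheory GRing.Theory Num.Theory.
Local Open Scope ring_scope.

Section Quat.
Variable R : realType.

Record quat := Quat { q0 : R; q1 : R; q2 : R; q3 : R }.

Definition qmul (p q : quat) : quat :=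
  Quat (q0 p * q0 q - q1 p * q1 q - q2 p * q2 q - q3 p * q3 q)
       (q0 p * q1 q + q1 p * q0 q + q2 p * q3 q - q3 p * q2 q)
       (q0 p * q2 q - q1 p * q3 q + q2 p * q0 q + q3 p * q1 q)
       (q0 p * q3 q + q1 p * q2 q - q2 p * q1 q + q3 p * q0 q).

Definition qconj (p : quat) : quat := Quat (q0 p) (- q1 p) (- q2 p) (- q3 p).

Definition qone : quat := Quat 1 0 0 0.
Definition qi : quat := Quat 0 1 0 0.
Definition qj : quat := Quat 0 0 1 0.
Definition qk : quat := Quat 0 0 0 1.
Definition qopp (p : quat) : quat := Quat (- q0 p) (- q1 p) (- q2 p) (- q3 p).

Definition unitq (p : quat) : Prop :=
  q0 p ^+ 2 + q1 p ^+ 2 + q2 p ^+ 2 + q3 p ^+ 2 = 1.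

Definition expi (t : R) : quat := Quat (cos t) (sin t) 0 0.
Definition expj (t : R) : quat := Quat (cos t) 0 (sin t) 0.

Definition inQ (p : quat) : Prop :=
  p = qone \/ p = qopp qone \/ p = qi \/ p = qopp qi \/
  p = qj \/ p = qopp qj \/ p = qk \/ p = qopp qk.

Definition trip := (quat * quat * quat)%type.
Definition tmul (x y : trip) : trip :=
  (qmul x.1.1 y.1.1, qmul x.1.2 y.1.2, qmul x.2 y.2).
(* inverse of a unit quaternion is its conjugate *)
Definition tinv (x : trip) : trip := (qconj x.1.1, qconj x.1.2, qconj x.2).
Definition tone : trip := (qone, qone, qone).
Definition inG (x : trip) : Prop := [/\ unitq x.1.1, unitq x.1.2 & unitq x.2].

Definition DeltaQ (x : trip) : Prop := exists q, inQ q /\ x = (q, q, q).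

Definition Pin2 (a1 a2 a3 : int) (x : trip) : Prop :=
  exists t : R,
    x = (expi (a1%:~R * t), expi (a2%:~R * t), expi (a3%:~R * t)) \/
    x = (qmul (expi (a1%:~R * t)) qj, qmul (expi (a2%:~R * t)) qj,
         qmul (expi (a3%:~R * t)) qj).

Definition Pjn2 (b1 b2 b3 : int) (x : trip) : Prop :=
  exists t : R,
    x = (expj (b1%:~R * t), expj (b2%:~R * t), expj (b3%:~R * t)) \/
    x = (qmul qi (expj (b1%:~R * t)), qmul qi (expj (b2%:~R * t)),
         qmul qi (expj (b3%:~R * t))).

Definition OneDiagS3 (x : trip) : Prop :=
  exists q, unitq q /\ x = (qone, q, q).

(** The cohomogeneity-one G-set underlying P^10_{a,b}: via its orbit
    decomposition over the orbit space [0,1], a point is a pair (t, g K_t)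
    with 0 <= t <= 1, g in G, where K_0 = Pin(2)_a (the zero section of
    G x_{Pin(2)_a} D^2), K_1 = Pjn(2)_b (the zero section of the other disk
    bundle), and K_t = Delta Q for 0 < t < 1 (the principal orbits).
    The point (t, g) represents the coset g K_t. *)
Definition isotropy (a1 a2 a3 b1 b2 b3 : int) (t : R) : trip -> Prop :=
  if t == 0 then Pin2 a1 a2 a3 else if t == 1 then Pjn2 b1 b2 b3 else DeltaQ.

Definition P10_point (t : R) (g : trip) : Prop := 0 <= t <= 1 /\ inG g.

Definition P10_eq (a1 a2 a3 b1 b2 b3 : int) (t : R) (g : trip) (t' : R) (g' : trip)
  : Prop := t = t' /\ isotropy a1 a2 a3 b1 b2 b3 t (tmul (tinv g) g').

Definition acts_freely_P10 (a1 a2 a3 b1 b2 b3 : int) (H : trip -> Prop) : Prop :=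
  forall h, H h -> forall t g, P10_point t g ->
    P10_eq a1 a2 a3 b1 b2 b3 t (tmul h g) t g -> h = tone.

End Quat.

(* Main.v *)
Require Import Defs.
From mathcomp Require Import all_boot all_order all_algebra.
From mathcomp Require Import reals trigo.
From mathcomp Require Import ring lra.
Import Order.TTheory GRing.Theory Num.Theory.
Local Open Scope ring_scope.
Set Implicit Arguments. Unset Strict Implicit.
Section Trig.
Variable R : realType.
Implicit Types x y u v w : R.

Lemma periodicZ (f : R -> R) (T : R) : periodic f T ->
  forall (k : int) x, f (x + k%:~R * T) = f x.
Proof.
move=> fT [n|n] x.
  by rewrite -pmulrn mulr_natl (periodicn fT).
rewrite NegzE mulrNz mulNr -pmulrn -[LHS](periodicn fT n.+1) mulr_natl.
by rewrite -addrA addNr addr0.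
Qed.

Lemma altn (f : R -> R) (T : R) : alternating f T ->
  forall (n : nat) x, f (x + T *+ n) = f x \/ f (x + T *+ n) = - f x.
Proof.
move=> fT; elim=> [|n ih] x; first by left; rewrite mulr0n addr0.
rewrite mulrSr addrA fT.
case: (ih x) => ->; [right|left] => //; by rewrite opprK.
Qed.

Lemma altZ (f : R -> R) (T : R) : alternating f T ->
  forall (k : int) x, f (x + k%:~R * T) = 0 -> f x = 0.
Proof.
move=> fT [n|n] x.
  rewrite -pmulrn mulr_natl; case: (altn fT n x) => -> //.
  by move/eqP; rewrite oppr_eq0 => /eqP.
rewrite NegzE mulrNz mulNr -pmulrn mulr_natl => H.
have := altn fT n.+1 (x - T *+ n.+1); rewrite -addrA addNr addr0 H.
case=> -> //. by rewrite oppr0.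
Qed.

Lemma sin_eq0 w : sin w = 0 -> exists k : int, w = k%:~R * pi.
Proof.
move=> H.
have pi0 : pi != 0 :> R by rewrite gt_eqF // pi_gt0.
set k := Num.floor (w / pi).
exists k.
set r := w - k%:~R * pi.
have hw : w = r + k%:~R * pi by rewrite /r subrK.
have : sin r = 0 by have := altZ (@sinDpi R) (k:=k) (x:=r); rewrite -hw; apply.
have := floor_itv (w / pi); rewrite -/k => /andP[h1 h2].
have r0 : 0 <= r.
  rewrite /r subr_ge0 -ler_pdivlMr ?pi_gt0 //.
have r1 : r < pi.
  rewrite /r ltrBlDr.
  have : w / pi * pi < (k + 1)%:~R * pi by rewrite ltr_pM2r ?pi_gt0.
  rewrite divfK //.
  by rewrite rmorphD /= mulrDl mul1r addrC.
move=> sr.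
case: (ltrgt0P r) => [rp|rn|rz].
- by have := sin_gt0_pi (x:=r); rewrite rp r1 sr ltxx => /(_ isT).
- by move: r0; rewrite leNgt rn.
- by rewrite hw rz add0r.
Qed.

Lemma cos_eq1 x : cos x = 1 -> exists k : int, x = k%:~R * (pi *+ 2).
Proof.
move=> H.
have hx : x = (x / 2) *+ 2 by rewrite -mulr_natr; field.
set y := x / 2 in hx *.
have : sin y = 0.
  move: H; rewrite hx cos_mulr2n => H.
  have := cos2Dsin2 y.
  have -> : cos y ^+ 2 = 1 by move: H; rewrite -mulr_natr; lra.
  move=> h; apply/eqP; rewrite -sqrf_eq0; apply/eqP.
  by apply: (addrI 1); rewrite addr0.
case/sin_eq0 => k hk; exists k.
by rewrite hx hk -mulrnAr.
Qed.

Lemma cos_eq u v : cos u = cos v -> exists k : int,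
  u - v = k%:~R * (pi *+ 2) \/ u + v = k%:~R * (pi *+ 2).
Proof.
move=> H.
set p := (u + v) / 2; set q := (u - v) / 2.
have hu : u = p + q by rewrite /p /q; field.
have hv : v = p - q by rewrite /p /q; field.
have : sin p * sin q = 0.
  by move: H; rewrite hu hv cosD cosB; lra.
move/eqP; rewrite mulf_eq0 => /orP[] /eqP /sin_eq0 [k hk]; exists k.
- by right; rewrite hu hv hk -mulr_natr; ring.
- by left; rewrite hu hv hk -mulr_natr; ring.
Qed.

Lemma cosZ (k : int) x : cos (x + k%:~R * (pi *+ 2)) = cos x.
Proof. exact: (periodicZ (@cosD2pi R)). Qed.
Lemma sinZ (k : int) x : sin (x + k%:~R * (pi *+ 2)) = sin x.
Proof. exact: (periodicZ (@sinD2pi R)). Qed.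

End Trig.

Section NT.
Variable R : realType.
Local Notation P := (pi *+ 2 : R).

Lemma P_neq0 : P != 0.
Proof. by rewrite gt_eqF // mulrn_wgt0 // pi_gt0. Qed.

Lemma cosZ0 (k : int) : cos (k%:~R * P) = 1.
Proof. by rewrite -[_ * _]add0r cosZ cos0. Qed.
Lemma sinZ0 (k : int) : sin (k%:~R * P) = 0.
Proof. by rewrite -[_ * _]add0r sinZ sin0. Qed.

Lemma bez (a c k m : int) (t : R) : gcdz a c = 1 ->
  a%:~R * t = k%:~R * P -> c%:~R * t = m%:~R * P ->
  exists n : int, t = n%:~R * P.
Proof.
move=> g ha hc.
case: (Bezoutz a c) => u [v huv].
exists (u * k + v * m).
have : t = (u * a + v * c)%:~R * t by rewrite huv g mul1r.
move=> ->; rewrite rmorphD !rmorphM /= mulrDl -!mulrA ha hc.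
by rewrite rmorphD !rmorphM /= mulrDl !mulrA.
Qed.

Lemma free_core (a1 a2 a3 : int) (t : R) :
  gcdz a1 (a2 + a3) = 1 -> gcdz a1 (a2 - a3) = 1 ->
  cos (a1%:~R * t) = 1 -> cos (a2%:~R * t) = cos (a3%:~R * t) ->
  cos (a2%:~R * t) = 1.
Proof.
move=> g1 g2 /cos_eq1 [k hk] /cos_eq [m [hm|hm]].
- have hc : (a2 - a3)%:~R * t = m%:~R * P by rewrite rmorphB /= mulrBl.
  have [n hn] := bez g2 hk hc.
  by rewrite hn mulrA -rmorphM /= cosZ0.
- have hc : (a2 + a3)%:~R * t = m%:~R * P by rewrite rmorphD /= mulrDl.
  have [n hn] := bez g1 hk hc.
  by rewrite hn mulrA -rmorphM /= cosZ0.
Qed.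

Lemma dvd_cs (d e : int) : d != 0 -> (d %| e)%Z ->
  cos (e%:~R * (P / d%:~R)) = 1 /\ sin (e%:~R * (P / d%:~R)) = 0.
Proof.
move=> d0 /dvdzP [q ->].
have d0' : d%:~R != 0 :> R by rewrite intr_eq0.
have -> : (q * d)%:~R * (P / d%:~R) = q%:~R * P.
  by rewrite rmorphM /=; field.
by rewrite cosZ0 sinZ0.
Qed.

Lemma theta (a1 a2 c d : int) : 1 < d -> (d %| a1)%Z -> (d %| c)%Z ->
  ~~ (d %| a2)%Z -> exists th : R,
  [/\ cos (a1%:~R * th) = 1, sin (a1%:~R * th) = 0, cos (a2%:~R * th) != 1,
      cos (c%:~R * th) = 1 & sin (c%:~R * th) = 0].
Proof.
move=> d1 da dc nda.
have d0 : d != 0 by rewrite gt_eqF // (lt_trans _ d1).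
have d0' : d%:~R != 0 :> R by rewrite intr_eq0.
exists (P / d%:~R).
have [h1 h2] := dvd_cs d0 da.
have [h3 h4] := dvd_cs d0 dc.
split => //.
apply/negP => /eqP /cos_eq1 [k hk].
move: nda; apply/negP; rewrite negbK; apply/dvdzP; exists k.
apply: (@intr_inj R).
have : a2%:~R * P = k%:~R * P * d%:~R :> R.
  by rewrite -hk; field.
rewrite rmorphM /= -mulrA [P * _]mulrC mulrA => /mulIf; apply.
exact: P_neq0.
Qed.

End NT.

Section Quats.
Variable R : realType.
Local Notation P := (pi *+ 2 : R).

Lemma quat_ext (p p' : quat R) : q0 p = q0 p' -> q1 p = q1 p' ->
  q2 p = q2 p' -> q3 p = q3 p' -> p = p'.
Proof. by case: p p' => ? ? ? ? [? ? ? ?] /= -> -> -> ->. Qed.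

Definition nrm (g : quat R) := q0 g ^+ 2 + q1 g ^+ 2 + q2 g ^+ 2 + q3 g ^+ 2.

Lemma L1 (g : quat R) : unitq g -> qmul (qconj (qmul (qone R) g)) g = qone R.
Proof.
move=> ug; apply: quat_ext => /=; try ring.
by apply: eq_trans ug; rewrite /=; ring.
Qed.

Lemma L2 (q g : quat R) : unitq g -> q0 (qmul (qconj (qmul q g)) g) = q0 q.
Proof.
move=> ug; transitivity (q0 q * nrm g); first by rewrite /nrm /=; ring.
by rewrite /nrm ug mulr1.
Qed.

Lemma L3 (p : quat R) : qmul (qconj (qmul (qconj p) (qone R))) (qone R) = p.
Proof. by apply: quat_ext => /=; ring. Qed.

Lemma unitq_one (q : quat R) : unitq q -> q0 q = 1 -> q = qone R.
Proof.
rewrite /unitq => uq h0; rewrite h0 expr1n in uq.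
have : q1 q ^+ 2 + q2 q ^+ 2 + q3 q ^+ 2 = 0.
  by apply: (addrI 1); rewrite addr0 -[RHS]uq !addrA.
move=> h.
have s1 := sqr_ge0 (q1 q); have s2 := sqr_ge0 (q2 q); have s3 := sqr_ge0 (q3 q).
have e1 : q1 q ^+ 2 = 0 by lra.
have e2 : q2 q ^+ 2 = 0 by lra.
have e3 : q3 q ^+ 2 = 0 by lra.
move/eqP: e1; move/eqP: e2; move/eqP: e3; rewrite !sqrf_eq0 => /eqP e3 /eqP e2 /eqP e1.
by apply: quat_ext.
Qed.

Lemma unitq_one' : unitq (qone R). Proof. by rewrite /unitq /=; ring. Qed.
Lemma unitq_j : unitq (qj R). Proof. by rewrite /unitq /=; ring. Qed.
Lemma unitq_i : unitq (qi R). Proof. by rewrite /unitq /=; ring. Qed.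

End Quats.

Section Main.
Variable R : realType.
Local Notation P := (pi *+ 2 : R).

Lemma get_d (a1 a2 a3 c : int) : a1 != 0 -> gcdz a1 (gcdz a2 a3) = 1 ->
  gcdz a1 c != 1 -> (c = a2 - a3 \/ c = a2 + a3) ->
  exists d, [/\ 1 < d, (d %| a1)%Z, (d %| c)%Z & ~~ (d %| a2)%Z].
Proof.
move=> a10 ga gc hc.
have g0 : gcdz a1 c != 0 by rewrite gcdz_eq0 negb_and a10.
have d1 : 1 < gcdz a1 c.
  move: g0 gc; rewrite /gcdz; case: (gcdn _ _) => [|[|n]] //.
exists (gcdz a1 c); split => //; first exact: dvdz_gcdl.
  exact: dvdz_gcdr.
apply/negP => da2.
have dc := dvdz_gcdr a1 c.
have da3 : (gcdz a1 c %| a3)%Z.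
  case: hc => hc.
    have -> : a3 = a2 - c by rewrite hc opprB addrC subrK.
    by rewrite rpredB.
  have -> : a3 = c - a2 by rewrite hc addrC addKr.
  by rewrite rpredB.
have : (gcdz a1 c %| gcdz a1 (gcdz a2 a3))%Z.
  by rewrite !dvdz_gcd dvdz_gcdl da2 da3.
rewrite ga dvdz1.
by move: d1; rewrite /gcdz; case: (gcdn _ _) => [|[|n]].
Qed.

Lemma pin_wit (a1 a2 a3 b1 b2 b3 : int) (th : R) (g3 : quat R) :
  unitq g3 -> cos (a1%:~R * th) = 1 -> sin (a1%:~R * th) = 0 ->
  cos (a2%:~R * th) != 1 ->
  qmul (qconj (qmul (qconj (expi (a2%:~R * th))) g3)) g3 = expi (a3%:~R * th) ->
  ~ acts_freely_P10 a1 a2 a3 b1 b2 b3 (@OneDiagS3 R).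
Proof.
move=> ug3 c1 s1 c2 e3 Hf.
set x := expi (a2%:~R * th).
have H1 : OneDiagS3 (qone R, qconj x, qconj x).
  exists (qconj x); split => //.
  by rewrite /unitq /=; apply: eq_trans (cos2Dsin2 (a2%:~R * th)); ring.
have H2 : P10_point 0 (qone R, qone R, g3).
  split; first by rewrite lexx ler01.
  by split => //; exact: unitq_one'.
have H3 : P10_eq a1 a2 a3 b1 b2 b3 0 (tmul (qone R, qconj x, qconj x) (qone R, qone R, g3)) 0 (qone R, qone R, g3).
  split => //; rewrite /isotropy eqxx; exists th; left.
  rewrite /tmul /tinv /= e3 L3 (L1 (unitq_one' R)).
  congr (_, _, _); apply: quat_ext; rewrite /= ?c1 ?s1 //.
have := Hf _ H1 _ _ H2 H3.
move/(congr1 (fun z => q0 z.1.2)) => /= h.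
  by move: c2; rewrite h eqxx.
Qed.

Lemma pjn_wit (a1 a2 a3 b1 b2 b3 : int) (th : R) (g3 : quat R) :
  unitq g3 -> cos (b1%:~R * th) = 1 -> sin (b1%:~R * th) = 0 ->
  cos (b2%:~R * th) != 1 ->
  qmul (qconj (qmul (qconj (expj (b2%:~R * th))) g3)) g3 = expj (b3%:~R * th) ->
  ~ acts_freely_P10 a1 a2 a3 b1 b2 b3 (@OneDiagS3 R).
Proof.
move=> ug3 c1 s1 c2 e3 Hf.
set x := expj (b2%:~R * th).
have H1 : OneDiagS3 (qone R, qconj x, qconj x).
  exists (qconj x); split => //.
  by rewrite /unitq /=; apply: eq_trans (cos2Dsin2 (b2%:~R * th)); ring.
have H2 : P10_point 1 (qone R, qone R, g3).
  split; first by rewrite lexx ler01.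
  by split => //; exact: unitq_one'.
have H3 : P10_eq a1 a2 a3 b1 b2 b3 1 (tmul (qone R, qconj x, qconj x) (qone R, qone R, g3)) 1 (qone R, qone R, g3).
  split => //; rewrite /isotropy oner_eq0 eqxx; exists th; left.
  rewrite /tmul /tinv /= e3 L3 (L1 (unitq_one' R)).
  congr (_, _, _); apply: quat_ext; rewrite /= ?c1 ?s1 //.
have := Hf _ H1 _ _ H2 H3.
move/(congr1 (fun z => q0 z.1.2)) => /= h.
  by move: c2; rewrite h eqxx.
Qed.

End Main.

Section Final.
Variable R : realType.

Lemma not_free_pin (a1 a2 a3 b1 b2 b3 : int) (c : int) :
  a1 != 0 -> gcdz a1 (gcdz a2 a3) = 1 -> gcdz a1 c != 1 ->
  (c = a2 - a3 \/ c = a2 + a3) ->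
  ~ acts_freely_P10 a1 a2 a3 b1 b2 b3 (@OneDiagS3 R).
Proof.
move=> a10 ga gc hc.
have [d [d1 da1 dc nda2]] := get_d a10 ga gc hc.
have [th [c1 s1 c2 cc sc]] := @theta R _ _ _ _ d1 da1 dc nda2.
case: hc => hc.
- apply: (pin_wit (g3 := qone R)) c1 s1 c2 _ => //; first exact: unitq_one'.
  have e : a3%:~R * th = a2%:~R * th - c%:~R * th :> R.
    by rewrite hc rmorphB /=; ring.
  apply: quat_ext; rewrite /= ?e ?cosB ?sinB ?cc ?sc; ring.
- apply: (pin_wit (g3 := qj R)) c1 s1 c2 _ => //; first exact: unitq_j.
  have e : a3%:~R * th = c%:~R * th - a2%:~R * th :> R.
    by rewrite hc rmorphD /=; ring.
  apply: quat_ext; rewrite /= ?e ?cosB ?sinB ?cc ?sc; ring.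
Qed.

Lemma not_free_pjn (a1 a2 a3 b1 b2 b3 : int) (c : int) :
  b1 != 0 -> gcdz b1 (gcdz b2 b3) = 1 -> gcdz b1 c != 1 ->
  (c = b2 - b3 \/ c = b2 + b3) ->
  ~ acts_freely_P10 a1 a2 a3 b1 b2 b3 (@OneDiagS3 R).
Proof.
move=> a10 ga gc hc.
have [d [d1 da1 dc nda2]] := get_d a10 ga gc hc.
have [th [c1 s1 c2 cc sc]] := @theta R _ _ _ _ d1 da1 dc nda2.
case: hc => hc.
- apply: (pjn_wit (g3 := qone R)) c1 s1 c2 _ => //; first exact: unitq_one'.
  have e : b3%:~R * th = b2%:~R * th - c%:~R * th :> R.
    by rewrite hc rmorphB /=; ring.
  apply: quat_ext; rewrite /= ?e ?cosB ?sinB ?cc ?sc; ring.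
- apply: (pjn_wit (g3 := qi R)) c1 s1 c2 _ => //; first exact: unitq_i.
  have e : b3%:~R * th = c%:~R * th - b2%:~R * th :> R.
    by rewrite hc rmorphD /=; ring.
  apply: quat_ext; rewrite /= ?e ?cosB ?sinB ?cc ?sc; ring.
Qed.

End Final.

Theorem lemma2p1 (R : realType) (a1 a2 a3 b1 b2 b3 : int) :
  (a1 = 1 %[mod 4])%Z -> (a2 = 1 %[mod 4])%Z -> (a3 = 1 %[mod 4])%Z ->
  (b1 = 1 %[mod 4])%Z -> (b2 = 1 %[mod 4])%Z -> (b3 = 1 %[mod 4])%Z ->
  gcdz a1 (gcdz a2 a3) = 1 -> gcdz b1 (gcdz b2 b3) = 1 ->
  (acts_freely_P10 a1 a2 a3 b1 b2 b3 (@OneDiagS3 R) <->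
   [/\ gcdz a1 (a2 + a3) = 1, gcdz a1 (a2 - a3) = 1,
       gcdz b1 (b2 + b3) = 1 & gcdz b1 (b2 - b3) = 1]).
Proof.
move=> ha1 _ _ hb1 _ _ ga gb.
have a10 : a1 != 0 by apply/eqP => a0; move/eqP: ha1; rewrite a0.
have b10 : b1 != 0 by apply/eqP => b0; move/eqP: hb1; rewrite b0.
split.
- move=> Hf; split; apply/eqP; apply/negPn/negP => hne.
  + exact: (not_free_pin a10 ga hne (or_intror erefl) Hf).
  + exact: (not_free_pin a10 ga hne (or_introl erefl) Hf).
  + exact: (not_free_pjn b10 gb hne (or_intror erefl) Hf).
  + exact: (not_free_pjn b10 gb hne (or_introl erefl) Hf).
case=> gp gm hp hm.
move=> h [q [uq ->]] t [[G1 G2] G3] [ht [u1 u2 u3]] [_ Hi].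
suff hq : q0 q = 1 by rewrite (unitq_one uq hq).
move: Hi; rewrite /isotropy /tmul /tinv /= (L1 u1).
have hY2 := L2 q u2; have hY3 := L2 q u3.
move: hY2 hY3.
move: (qmul (qconj (qmul q G2)) G2) (qmul (qconj (qmul q G3)) G3) => Y2 Y3 hY2 hY3.
case: eqP => [_|_].
  case=> tau [] E.
  + have e1 := congr1 (fun z => q0 z.1.1) E.
    have e2 := congr1 (fun z => q0 z.1.2) E.
    have e3 := congr1 (fun z => q0 z.2) E.
    simpl in e1, e2, e3.
    rewrite hY2 in e2; rewrite hY3 in e3.
    rewrite e2; apply: (free_core gp gm) => //; by rewrite -e2 -e3.
  + have e1 := congr1 (fun z => q0 z.1.1) E.
    simpl in e1.
    have /eqP : (1 : R) = 0 by rewrite e1; ring.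
    by rewrite oner_eq0.
case: eqP => [_|_].
  case=> tau [] E.
  + have e1 := congr1 (fun z => q0 z.1.1) E.
    have e2 := congr1 (fun z => q0 z.1.2) E.
    have e3 := congr1 (fun z => q0 z.2) E.
    simpl in e1, e2, e3.
    rewrite hY2 in e2; rewrite hY3 in e3.
    rewrite e2; apply: (free_core hp hm) => //; by rewrite -e2 -e3.
  + have e1 := congr1 (fun z => q0 z.1.1) E.
    simpl in e1.
    have /eqP : (1 : R) = 0 by rewrite e1; ring.
    by rewrite oner_eq0.
case=> q' [_ E].
have e1 := congr1 (fun z => q0 z.1.1) E.
have e2 := congr1 (fun z => q0 z.1.2) E.
simpl in e1, e2.
by rewrite -hY2 e2 -e1.
Qed.
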